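(* $\operatorname{Sort}\mid_{\mathrm{W}}\operatorname{C}_\mathbb{R}$, i.e. $\operatorname{Sort}\not\le_{\mathrm{W}}\operatorname{C}_\mathbb{R}$ and $\operatorname{C}_\mathbb{R}\not\le_{\mathrm{W}}\operatorname{Sort}$.
   Context: Represented spaces: a representation of a set $X$ is a partial surjection $\delta_X:\subseteq\mathbb{N}^\mathbb{N}\to X$. For a partial multi-valued function $f:\subseteq X\rightrightarrows Y$, a realizer is a partial $F:\subseteq\mathbb{N}^\mathbb{N}\to\mathbb{N}^\mathbb{N}$ with $\delta_Y(F(p))\in f(\delta_X(p))$ for all $p$ with $\delta_X(p)\in\mathrm{dom}(f)$. Weihrauch reducibility: $f\le_{\mathrm{W}} g$ iff there are computable partial $H:\subseteq\mathbb{N}^\mathbb{N}\times\mathbb{N}^\mathbb{N}\to\mathbb{N}^\mathbb{N}$ and $K:\subseteq\mathbb{N}^\mathbb{N}\to\mathbb{N}^\mathbb{N}$ such that $p\mapsto H(p,G(K(p)))$ is a realizer of $f$ for every realizer $G$ of $g$. $\operatorname{Sort}:2^\mathbb{N}\to 2^\mathbb{N}$ is defined by $\operatorname{Sort}(p)=0^n1^\mathbb{N}$ if $p$ contains exactly $n$ occurrences of $0$, and $\operatorname{Sort}(p)=0^\mathbb{N}$ if $p$ contains infinitely many occurrences of $0$. $\mathbb{R}$ carries the Cauchy representation (names are sequences of rationals $(q_i)$ with $|q_i-q_j|\le2^{-i}$ for $j\ge i$, naming their limit). $\mathcal{A}_-(\mathbb{R})$ is the space of closed subsets of $\mathbb{R}$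 with negative information: a name of closed $A$ is an enumeration of rational open intervals whose union is $\mathbb{R}\setminus A$. Closed choice $\operatorname{C}_\mathbb{R}:\subseteq\mathcal{A}_-(\mathbb{R})\rightrightarrows\mathbb{R}$ maps each nonempty closed $A$ to the set $A$ (any element of $A$ is a valid output). *)

(* Defs.v *)
From Stdlib Require Import Reals Arith Cantor.
From Stdlib Require Import Rtopology.
Open Scope R_scope.

Definition baire : Type := nat -> nat.

Definition npair (a b : nat) : nat := Cantor.to_nat (a, b).

Inductive prf : Type :=
  | PZero : prf
  | PSucc : prf
  | PFst  : prf
  | PSnd  : prf
  | PComp : prf -> prf -> prf
  | PPair : prf -> prf -> prf
  | PRec  : prf -> prf -> prf
  | PMu   : prf -> prf.

Inductive peval : prf -> nat -> nat -> Prop :=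
  | ev_zero x : peval PZero x 0
  | ev_succ x : peval PSucc x (S x)
  | ev_fst a b : peval PFst (npair a b) a
  | ev_snd a b : peval PSnd (npair a b) b
  | ev_comp f g x y z : peval g x y -> peval f y z -> peval (PComp f g) x z
  | ev_pair f g x y z : peval f x y -> peval g x z -> peval (PPair f g) x (npair y z)
  | ev_rec0 f g x y : peval f x y -> peval (PRec f g) (npair 0 x) y
  | ev_recS f g n x y z :
      peval (PRec f g) (npair n x) y ->
      peval g (npair n (npair y x)) z ->
      peval (PRec f g) (npair (S n) x) z
  | ev_mu f x n :
      peval f (npair n x) 0 ->
      (forall m, (m < n)%nat -> exists v, v <> 0%nat /\ peval f (npair m x) v) ->
      peval (PMu f) x n.

Fixpoint code_list (l : list nat) : nat :=
  match l with
  | nil => 0%nat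
  | cons a l' => S (npair a (code_list l'))
  end.

Fixpoint prefix (p : baire) (k : nat) : list nat :=
  match k with
  | O => nil
  | S k' => app (prefix p k') (cons (p k') nil)
  end.

Definition pfun1 := baire -> baire -> Prop.
Definition pfun2 := baire -> baire -> baire -> Prop.

Definition functional1 (F : pfun1) : Prop :=
  forall p q1 q2, F p q1 -> F p q2 -> q1 = q2.
Definition functional2 (F : pfun2) : Prop :=
  forall p p' q1 q2, F p p' q1 -> F p p' q2 -> q1 = q2.

(** Type-2 computability via (recursive) associates: a partial F is computable
    iff there is a partial recursive e such that, for every p in dom(F) and
    every output position n, e evaluated on (n, p[0..j)) is defined and 0 for
    all j < k and equals F(p)(n)+1 at j = k, for some k.  (A Type-2 machine
    reading successively longer prefixes.) *)
Definition computable1 (F : pfun1) : Prop :=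
  exists e : prf, forall p q, F p q -> forall n, exists k,
    peval e (npair n (code_list (prefix p k))) (S (q n)) /\
    forall j, (j < k)%nat -> peval e (npair n (code_list (prefix p j))) 0%nat.

Definition computable2 (F : pfun2) : Prop :=
  exists e : prf, forall p p' q, F p p' q -> forall n, exists k,
    peval e (npair n (npair (code_list (prefix p k)) (code_list (prefix p' k))))
          (S (q n)) /\
    forall j, (j < k)%nat ->
      peval e (npair n (npair (code_list (prefix p j)) (code_list (prefix p' j)))) 0%nat.

(** * Represented spaces: a carrier with a (partial, surjective) representation,
    given as the relation  delta p x  <->  delta(p) = x. *)
Record repspace : Type := RepSpace {
  carrier :> Type;
  delta : baire -> carrier -> Prop
}.

Record mvfun (X Y : repspace) : Type := MVFun {
  mdom : carrier X -> Prop;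
  mval : carrier X -> carrier Y -> Prop
}.
Arguments mdom {X Y}.
Arguments mval {X Y}.

Definition realizer {X Y : repspace} (f : mvfun X Y) (F : pfun1) : Prop :=
  functional1 F /\
  forall p x, delta X p x -> mdom f x ->
    exists q, F p q /\ exists y, delta Y q y /\ mval f x y.

Definition weihrauch_le {X Y Z W : repspace} (f : mvfun X Y) (g : mvfun Z W) : Prop :=
  exists (H : pfun2) (K : pfun1),
    functional2 H /\ computable2 H /\ functional1 K /\ computable1 K /\
    forall G : pfun1, realizer g G ->
      realizer f (fun p r => exists q s, K p q /\ G q s /\ H p s r).

(** * Cantor space 2^N, as the subspace of Baire space of 0-1 sequences
    (bit true = 1, false = 0) *)
Definition cantor : repspace :=
  RepSpace (nat -> bool) (fun p x => forall n, p n = (if x n then 1%nat else 0%nat)).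

Fixpoint zeros_upto (x : nat -> bool) (m : nat) : nat :=
  match m with
  | O => O
  | S m' => (zeros_upto x m' + (if x m' then 0 else 1))%nat
  end.

Definition exactly_n_zeros (x : nat -> bool) (n : nat) : Prop :=
  exists N, forall m, (N <= m)%nat -> zeros_upto x m = n.

Definition inf_many_zeros (x : nat -> bool) : Prop :=
  forall N, exists m, (N <= m)%nat /\ x m = false.

Definition Sort : mvfun cantor cantor :=
  MVFun cantor cantor (fun _ => True)
    (fun x y =>
       (forall n, exactly_n_zeros x n -> forall k, y k = Nat.leb n k) /\
       (inf_many_zeros x -> forall k, y k = false)).

Definition qdec (n : nat) : R :=
  let (a, b) := Cantor.of_nat n in
  let (c, d) := Cantor.of_nat a in
  (INR c - INR d) / INR (S b).

Definition reals : repspace :=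
  RepSpace R (fun p x =>
    (forall i j, (i <= j)%nat -> Rabs (qdec (p i) - qdec (p j)) <= (/ 2) ^ i) /\
    Un_cv (fun i => qdec (p i)) x).

Definition in_interval (c : nat) (x : R) : Prop :=
  let (a, b) := Cantor.of_nat c in qdec a < x < qdec b.

(** A name p enumerates
    rational open intervals: p n = 0 means "no interval", p n = c+1 lists the
    interval coded by c; the union of the listed intervals is R \ A. *)
Definition closedR : repspace :=
  RepSpace {A : R -> Prop | closed_set A}
    (fun p A => forall x, ~ proj1_sig A x <->
                  exists n c, p n = S c /\ in_interval c x).

Definition C_R : mvfun closedR reals :=
  MVFun closedR reals (fun A => exists x, proj1_sig A x) (fun A x => proj1_sig A x).

(* Main.v *)
Require Import Defs.
From Stdlib Require Import Reals.
From Stdlib Require Import Arith Lia Lra List Cantor Rtopology ZArith.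
From Stdlib Require Import Classical ClassicalEpsilon FunctionalExtensionality.
Open Scope R_scope.
Import ListNotations.

Lemma npair_inj a b c d : npair a b = npair c d -> a = c /\ b = d.
Proof.
  unfold npair; intro H.
  assert (E := f_equal Cantor.of_nat H). rewrite !cancel_of_to in E.
  inversion E; auto.
Qed.

Section Ind.
Variable P : prf -> nat -> nat -> Prop.
Hypothesis Hzero : forall x, P PZero x 0.
Hypothesis Hsucc : forall x, P PSucc x (S x).
Hypothesis Hfst : forall a b, P PFst (npair a b) a.
Hypothesis Hsnd : forall a b, P PSnd (npair a b) b.
Hypothesis Hcomp : forall f g x y z, peval g x y -> P g x y -> peval f y z -> P f y z -> P (PComp f g) x z.
Hypothesis Hpair : forall f g x y z, peval f x y -> P f x y -> peval g x z -> P g x z -> P (PPair f g) x (npair y z).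
Hypothesis Hrec0 : forall f g x y, peval f x y -> P f x y -> P (PRec f g) (npair 0 x) y.
Hypothesis HrecS : forall f g n x y z, peval (PRec f g) (npair n x) y -> P (PRec f g) (npair n x) y ->
   peval g (npair n (npair y x)) z -> P g (npair n (npair y x)) z -> P (PRec f g) (npair (S n) x) z.
Hypothesis Hmu : forall f x n, peval f (npair n x) 0 -> P f (npair n x) 0 ->
   (forall m, (m < n)%nat -> exists v, v <> 0%nat /\ peval f (npair m x) v /\ P f (npair m x) v) ->
   P (PMu f) x n.

Fixpoint peval_ind2 f x y (D : peval f x y) {struct D} : P f x y :=
  match D in peval f x y return P f x y with
  | ev_zero x => Hzero x
  | ev_succ x => Hsucc x
  | ev_fst a b => Hfst a b
  | ev_snd a b => Hsnd a b
  | ev_comp f g x y z D1 D2 => Hcomp f g x y z D1 (peval_ind2 _ _ _ D1) D2 (peval_ind2 _ _ _ D2)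
  | ev_pair f g x y z D1 D2 => Hpair f g x y z D1 (peval_ind2 _ _ _ D1) D2 (peval_ind2 _ _ _ D2)
  | ev_rec0 f g x y D1 => Hrec0 f g x y D1 (peval_ind2 _ _ _ D1)
  | ev_recS f g n x y z D1 D2 => HrecS f g n x y z D1 (peval_ind2 _ _ _ D1) D2 (peval_ind2 _ _ _ D2)
  | ev_mu f x n D1 Hs => Hmu f x n D1 (peval_ind2 _ _ _ D1)
      (fun m Hm => match Hs m Hm with
                   | ex_intro _ v (conj h1 h2) => ex_intro _ v (conj h1 (conj h2 (peval_ind2 _ _ _ h2)))
                   end)
  end.
End Ind.

Ltac npinj := repeat match goal with H: npair _ _ = npair _ _ |- _ =>
   apply npair_inj in H; destruct H; subst end.

Lemma peval_det : forall f x y1, peval f x y1 -> forall y2, peval f x y2 -> y1 = y2.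
Proof.
  apply (peval_ind2 (fun f x y1 => forall y2, peval f x y2 -> y1 = y2)).
  - intros x y2 H; inversion H; auto.
  - intros x y2 H; inversion H; auto.
  - intros a b y2 H; inversion H; subst; npinj; auto.
  - intros a b y2 H; inversion H; subst; npinj; auto.
  - intros f g x y z _ IH1 _ IH2 y2 H; inversion H; subst.
    match goal with H1: peval g x ?w, H2 : peval f ?w y2 |- _ =>
      apply IH2; rewrite (IH1 _ H1); exact H2 end.
  - intros f g x y z _ IH1 _ IH2 y2 H; inversion H; subst.
    match goal with H1: peval f x ?w, H2 : peval g x ?w' |- _ =>
      rewrite (IH1 _ H1), (IH2 _ H2); auto end.
  - intros f g x y _ IH y2 H; inversion H; subst; npinj; try discriminate; auto.
  - intros f g n x y z _ IH1 _ IH2 y2 H; inversion H; subst; npinj; try discriminate.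
    match goal with E : S _ = S _ |- _ => injection E as E; subst end.
    match goal with H1: peval (PRec f g) (npair _ x) ?w, H2 : peval g (npair _ (npair ?w x)) y2 |- _ =>
      apply IH2; rewrite (IH1 _ H1); exact H2 end.
  - intros f x n _ IH Hs y2 H; inversion H as [| | | | | | | |f0 x0 n0 Hm Hs2]; subst.
    destruct (Nat.lt_trichotomy n y2) as [Hl|[Hl|Hl]]; auto.
    + destruct (Hs2 _ Hl) as [v [Hv Hv']]. exfalso; apply Hv.
      symmetry; apply (IH _ Hv').
    + destruct (Hs _ Hl) as [v [Hv [_ Hv']]]. exfalso; apply Hv.
      apply (Hv' _ Hm).
Qed.

Lemma prefix_ext (p p' : baire) k : (forall i, (i < k)%nat -> p i = p' i) -> prefix p k = prefix p' k.
Proof.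
  induction k; intros H; simpl; auto.
  rewrite IHk by (intros; apply H; lia). rewrite H by lia. auto.
Qed.

Lemma first_nz_unique (P : nat -> nat -> Prop)
  (Hd : forall k v1 v2, P k v1 -> P k v2 -> v1 = v2) k1 v1 k2 v2 :
  P k1 (S v1) -> (forall j, (j < k1)%nat -> P j 0%nat) ->
  P k2 (S v2) -> (forall j, (j < k2)%nat -> P j 0%nat) -> k1 = k2 /\ v1 = v2.
Proof.
  intros H1 H1' H2 H2'.
  destruct (Nat.lt_trichotomy k1 k2) as [Hl|[Hl|Hl]].
  - specialize (Hd _ _ _ H1 (H2' _ Hl)); discriminate.
  - subst; split; auto. specialize (Hd _ _ _ H1 H2); congruence.
  - specialize (Hd _ _ _ H2 (H1' _ Hl)); discriminate.
Qed.

Lemma contH (H : pfun2) : computable2 H -> forall p s r n, H p s r -> exists k,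
  forall p2 s2 r2, H p2 s2 r2 -> (forall i, (i < k)%nat -> p2 i = p i) ->
     (forall i, (i < k)%nat -> s2 i = s i) -> r2 n = r n.
Proof.
  intros [e He] p s r n Hr. destruct (He _ _ _ Hr n) as [k [Hk Hk']].
  exists k. intros p2 s2 r2 Hr2 Ap As.
  destruct (He _ _ _ Hr2 n) as [k2 [Hk2 Hk2']].
  set (P := fun j v => peval e (npair n (npair (code_list (prefix p2 j)) (code_list (prefix s2 j)))) v).
  assert (Hd : forall k v1 v2, P k v1 -> P k v2 -> v1 = v2) by (intros; eapply peval_det; eauto).
  assert (Hk0 : forall j, (j <= k)%nat -> prefix p2 j = prefix p j /\ prefix s2 j = prefix s j).
  { intros j Hj; split; apply prefix_ext; intros; [apply Ap|apply As]; lia. }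
  destruct (first_nz_unique P Hd k (r n) k2 (r2 n)) as [_ E]; auto.
  - unfold P; destruct (Hk0 k (le_n _)) as [-> ->]; auto.
  - intros j Hj; unfold P; destruct (Hk0 j ltac:(lia)) as [-> ->]; auto.
Qed.

Lemma contK (K : pfun1) : computable1 K -> forall p r n, K p r -> exists k,
  forall p2 r2, K p2 r2 -> (forall i, (i < k)%nat -> p2 i = p i) -> r2 n = r n.
Proof.
  intros [e He] p r n Hr. destruct (He _ _ Hr n) as [k [Hk Hk']].
  exists k. intros p2 r2 Hr2 Ap.
  destruct (He _ _ Hr2 n) as [k2 [Hk2 Hk2']].
  set (P := fun j v => peval e (npair n (code_list (prefix p2 j))) v).
  assert (Hd : forall k v1 v2, P k v1 -> P k v2 -> v1 = v2) by (intros; eapply peval_det; eauto).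
  assert (Hk0 : forall j, (j <= k)%nat -> prefix p2 j = prefix p j).
  { intros j Hj; apply prefix_ext; intros; apply Ap; lia. }
  destruct (first_nz_unique P Hd k (r n) k2 (r2 n)) as [_ E]; auto.
  - unfold P; rewrite (Hk0 k (le_n _)); auto.
  - intros j Hj; unfold P; rewrite (Hk0 j ltac:(lia)); auto.
Qed.


Lemma hp_pos n : 0 < (/2)^n.
Proof. apply pow_lt; lra. Qed.

Lemma hp_le i k : (i <= k)%nat -> (/2)^k <= (/2)^i.
Proof.
  intros H. rewrite !pow_inv. apply Rinv_le_contravar.
  - apply pow_lt; lra.
  - apply Rle_pow; lra || auto.
Qed.

Lemma hp_S n : (/2)^(S n) + (/2)^(S n) = (/2)^n.
Proof. simpl; field. Qed.

Lemma hp_small eps : 0 < eps -> exists N, (/2)^N < eps.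
Proof.
  intros He. destruct (pow_lt_1_zero (/2) ltac:(rewrite Rabs_right; lra) eps He) as [N HN].
  exists N. specialize (HN N (le_n _)). rewrite Rabs_right in HN; auto.
  left; apply hp_pos.
Qed.

Lemma qdec_code c d b : qdec (Cantor.to_nat (Cantor.to_nat (c, d), b)) = (INR c - INR d) / INR (S b).
Proof. unfold qdec. rewrite !cancel_of_to. auto. Qed.

Lemma Z_to_nat_neg' z : (z <= 0)%Z -> Z.to_nat z = 0%nat.
Proof. intros; destruct z; simpl; auto; lia. Qed.

Lemma qdec_codeZ (m : Z) b :
  qdec (Cantor.to_nat (Cantor.to_nat (Z.to_nat m, Z.to_nat (- m)), b)) = IZR m / INR (S b).
Proof.
  rewrite qdec_code. f_equal.
  destruct (Z_le_gt_dec 0 m).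
  - rewrite (Z_to_nat_neg' (-m)) by lia. rewrite INR_IZR_INZ, Z2Nat.id by lia. simpl; ring.
  - rewrite (Z_to_nat_neg' m) by lia. rewrite (INR_IZR_INZ (Z.to_nat (-m))), Z2Nat.id by lia.
    rewrite opp_IZR. simpl; ring.
Qed.

Lemma approx_ex z i : exists c, Rabs (qdec c - z) <= (/2)^(S i).
Proof.
  set (D := Nat.pow 2 (S i)).
  assert (HD : (0 < D)%nat) by (unfold D; apply Nat.neq_0_lt_0, Nat.pow_nonzero; lia).
  assert (HDR : INR D = 2 ^ (S i)) by (unfold D; rewrite pow_INR; simpl; f_equal; ring).
  set (m := (up (z * INR D) - 1)%Z).
  exists (Cantor.to_nat (Cantor.to_nat (Z.to_nat m, Z.to_nat (- m)), (D - 1)%nat)).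
  rewrite qdec_codeZ. replace (S (D - 1)) with D by lia.
  destruct (archimed (z * INR D)) as [A1 A2].
  assert (Hm : IZR m = IZR (up (z * INR D)) - 1) by (unfold m; rewrite minus_IZR; auto).
  assert (P : 0 < INR D) by (apply lt_0_INR; auto).
  rewrite pow_inv, <- HDR.
  apply Rabs_le. split.
  - apply (Rmult_le_reg_r (INR D)); auto. field_simplify; try lra.
  - apply (Rmult_le_reg_r (INR D)); auto. field_simplify; try lra.
Qed.

Definition nm (z : R) : baire := fun i => proj1_sig (constructive_indefinite_description _ (approx_ex z i)).

Lemma nm_spec z i : Rabs (qdec (nm z i) - z) <= (/2)^(S i).
Proof. unfold nm. destruct (constructive_indefinite_description _ _); auto. Qed.

Lemma name_close r z : delta reals r z -> forall i, Rabs (qdec (r i) - z) <= (/2)^i.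
Proof.
  intros [Hc Hl] i.
  destruct (Rle_dec (Rabs (qdec (r i) - z)) ((/2)^i)) as [h|h]; auto. exfalso.
  set (eps := Rabs (qdec (r i) - z) - (/2)^i).
  destruct (Hl eps ltac:(unfold eps; lra)) as [N HN].
  specialize (HN (Nat.max N i) ltac:(lia)). specialize (Hc i (Nat.max N i) ltac:(lia)).
  unfold Rdist in HN.
  assert (Rabs (qdec (r i) - z) <= Rabs (qdec (r i) - qdec (r (Nat.max N i))) + Rabs (qdec (r (Nat.max N i)) - z)).
  { replace (qdec (r i) - z) with ((qdec (r i) - qdec (r (Nat.max N i))) + (qdec (r (Nat.max N i)) - z)) by ring.
    apply Rabs_triang. }
  unfold eps in HN; lra.
Qed.

Lemma name_crit (r : baire) (a : nat -> R) z :
  (forall i j, (i <= j)%nat -> Rabs (qdec (r i) - qdec (r j)) <= (/2)^i) ->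
  (forall i, Rabs (qdec (r i) - z) <= (/2)^i) -> delta reals r z.
Proof.
  intros H1 H2. split; auto. intros eps He.
  destruct (hp_small eps He) as [N HN]. exists N. intros n Hn. unfold Rdist.
  eapply Rle_lt_trans; [apply H2|]. eapply Rle_lt_trans; [apply hp_le; eauto|]; auto.
Qed.

Lemma tri a b c : Rabs (a - c) <= Rabs (a - b) + Rabs (b - c).
Proof. replace (a - c) with ((a - b) + (b - c)) by ring. apply Rabs_triang. Qed.

Lemma nm_name z : delta reals (nm z) z.
Proof.
  apply (name_crit _ (fun _ => 0)).
  - intros i j Hij. eapply Rle_trans; [apply (tri _ z)|].
    rewrite (Rabs_minus_sym z). pose proof (nm_spec z i). pose proof (nm_spec z j).
    pose proof (hp_le _ _ (le_n_S _ _ Hij)). rewrite <- (hp_S i). lra.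
  - intros i. eapply Rle_trans; [apply nm_spec|]. apply hp_le; lia.
Qed.

Definition spl (r r' : baire) (k : nat) : baire := fun i => if Nat.ltb i k then r i else r' i.

Lemma spl_name z z' k : Rabs (z' - z) <= (/2)^(S k) -> delta reals (spl (nm z) (nm z') k) z'.
Proof.
  intros Hz. apply (name_crit _ (fun _ => 0)).
  - intros i j Hij. unfold spl.
    destruct (Nat.ltb_spec i k); destruct (Nat.ltb_spec j k).
    + eapply Rle_trans; [apply (tri _ z)|].
      rewrite (Rabs_minus_sym z). pose proof (nm_spec z i). pose proof (nm_spec z j).
      pose proof (hp_le _ _ (le_n_S _ _ Hij)). rewrite <- (hp_S i). lra.
    + eapply Rle_trans; [apply (tri _ z)|].
      eapply Rle_trans; [apply Rplus_le_compat_l; apply (tri _ z')|].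
      rewrite (Rabs_minus_sym z'). pose proof (nm_spec z i). pose proof (nm_spec z' j).
      pose proof (hp_le (S k) (S j) ltac:(lia)). pose proof (hp_le (S i) k ltac:(lia)).
      pose proof (hp_S k). pose proof (Rabs_minus_sym z z'). rewrite <- (hp_S i). lra.
    + lia.
    + eapply Rle_trans; [apply (tri _ z')|].
      rewrite (Rabs_minus_sym z'). pose proof (nm_spec z' i). pose proof (nm_spec z' j).
      pose proof (hp_le _ _ (le_n_S _ _ Hij)). rewrite <- (hp_S i). lra.
  - intros i. unfold spl. destruct (Nat.ltb_spec i k).
    + eapply Rle_trans; [apply (tri _ z)|]. pose proof (nm_spec z i).
      pose proof (hp_le (S i) k ltac:(lia)). pose proof (hp_le k (S k) ltac:(lia)).
      rewrite <- (hp_S i). pose proof (Rabs_minus_sym z z'). lra.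
    + eapply Rle_trans; [apply nm_spec|]. apply hp_le; lia.
Qed.


Definition inA (q : baire) (y : R) : Prop := ~ exists n c, q n = S c /\ in_interval c y.

Lemma inA_closed q : closed_set (inA q).
Proof.
  unfold closed_set, open_set, complementary. intros x Hx. apply NNPP in Hx.
  destruct Hx as [n [c [Hq Hi]]]. unfold in_interval in Hi.
  destruct (Cantor.of_nat c) as [a b] eqn:Ec.
  assert (Hp : 0 < Rmin (x - qdec a) (qdec b - x)) by (apply Rmin_glb_lt; lra).
  exists (mkposreal _ Hp). intros y Hy HA. apply HA. exists n, c. split; auto.
  unfold in_interval. rewrite Ec. unfold disc in Hy; simpl in Hy.
  pose proof (Rmin_l (x - qdec a) (qdec b - x)). pose proof (Rmin_r (x - qdec a) (qdec b - x)).
  apply Rabs_def2 in Hy. lra.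
Qed.

Definition closedA q : {A : R -> Prop | closed_set A} := exist _ (inA q) (inA_closed q).

Lemma delta_closedA q : delta closedR q (closedA q).
Proof. intro x; simpl; split; [apply NNPP | intros H H'; apply H'; exact H]. Qed.

Lemma delta_closed_inA q A : delta closedR q A -> forall y, proj1_sig A y <-> inA q y.
Proof.
  intros H y. specialize (H y). unfold inA. split.
  - intros Hy H'. apply H in H'. auto.
  - intros Hy. apply NNPP. intros Hn. apply Hy. apply H; auto.
Qed.

Lemma zeros_mono x m d : (zeros_upto x m <= zeros_upto x (m + d))%nat.
Proof. induction d; simpl; [rewrite Nat.add_0_r; lia|]. rewrite Nat.add_succ_r; simpl; lia. Qed.

Lemma exactly_unique x n1 n2 : exactly_n_zeros x n1 -> exactly_n_zeros x n2 -> n1 = n2.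
Proof.
  intros [N1 H1] [N2 H2]. rewrite <- (H1 (Nat.max N1 N2)), <- (H2 (Nat.max N1 N2)); auto; lia.
Qed.

Lemma exactly_inf_false x n : exactly_n_zeros x n -> inf_many_zeros x -> False.
Proof.
  intros [N H] Hi. destruct (Hi N) as [m [Hm Hx]].
  pose proof (H m Hm). pose proof (H (S m) ltac:(lia)). simpl in H1. rewrite Hx in H1. lia.
Qed.

Lemma tail_const x N : (forall n, (N <= n)%nat -> x n = true) ->
  forall d, zeros_upto x (N + d) = zeros_upto x N.
Proof.
  intros H d; induction d; [rewrite Nat.add_0_r; auto|].
  rewrite Nat.add_succ_r; simpl. rewrite H by lia. lia.
Qed.

Lemma tail_exactly x N : (forall n, (N <= n)%nat -> x n = true) -> exactly_n_zeros x (zeros_upto x N).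
Proof.
  intros H. exists N. intros m Hm. replace m with (N + (m - N))%nat by lia. apply tail_const; auto.
Qed.

Lemma not_exactly_inf x : ~ (exists n, exactly_n_zeros x n) -> inf_many_zeros x.
Proof.
  intros H N. apply NNPP. intros Hn. apply H. exists (zeros_upto x N). apply tail_exactly.
  intros n Hn'. destruct (x n) eqn:E; auto. exfalso; apply Hn; exists n; auto.
Qed.

Lemma sort_exact x j z : exactly_n_zeros x j -> mval Sort x z -> z j = true.
Proof. intros H [Hz _]. rewrite (Hz j H j). apply Nat.leb_refl. Qed.

Lemma sort_inf x j z : inf_many_zeros x -> mval Sort x z -> z j = false.
Proof. intros H [_ Hz]. apply Hz; auto. Qed.

Definition str (s : nat) : baire :=
  match s with 0%nat => fun _ => 0%nat | S n => fun k => if Nat.leb n k then 1%nat else 0%nat end.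

Definition Gsort : pfun1 := fun q s => exists x, delta cantor q x /\
  ((exists n, exactly_n_zeros x n /\ s = str (S n)) \/ (inf_many_zeros x /\ s = str 0)).

Lemma cantor_name_unique q x1 x2 : delta cantor q x1 -> delta cantor q x2 -> x1 = x2.
Proof.
  intros H1 H2. apply functional_extensionality. intros n. specialize (H1 n); specialize (H2 n).
  rewrite H1 in H2. destruct (x1 n), (x2 n); auto; discriminate.
Qed.

Lemma Gsort_real : realizer Sort Gsort.
Proof.
  split.
  - intros q s1 s2 [x1 [Hx1 C1]] [x2 [Hx2 C2]].
    rewrite <- (cantor_name_unique _ _ _ Hx1 Hx2) in C2.
    destruct C1 as [[n1 [E1 ->]]|[I1 ->]]; destruct C2 as [[n2 [E2 ->]]|[I2 ->]]; auto.
    + rewrite (exactly_unique _ _ _ E1 E2); auto.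
    + exfalso; eapply exactly_inf_false; eauto.
    + exfalso; eapply exactly_inf_false; eauto.
  - intros p x Hp _. destruct (classic (exists n, exactly_n_zeros x n)) as [[n Hn]|Hn].
    + exists (str (S n)). split. { exists x; split; auto. left; eauto. }
      exists (fun k => Nat.leb n k). split.
      * intro k; simpl; auto.
      * split.
        -- intros n' Hn' k. rewrite (exactly_unique _ _ _ Hn Hn'); auto.
        -- intros Hi; exfalso; eapply exactly_inf_false; eauto.
    + exists (str 0). split. { exists x; split; auto. right; split; auto. apply not_exactly_inf; auto. }
      exists (fun _ => false). split.
      * intro k; simpl; auto.
      * split.
        -- intros n' Hn'; exfalso; apply Hn; eauto.
        -- auto.
Qed.


Definition Mn (s : nat) : nat := Nat.pow 2 (3*s+3).

Lemma Mn_pos s : (0 < Mn s)%nat.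
Proof. unfold Mn; apply Nat.neq_0_lt_0, Nat.pow_nonzero; lia. Qed.

Lemma Mn_R s : INR (Mn s) = / (/2)^(3*s+3).
Proof. unfold Mn. rewrite pow_INR, pow_inv, Rinv_inv. simpl INR. auto. Qed.

Definition Nint (s v : nat) : nat :=
  let (a, b) := Cantor.of_nat v in let (c, d) := Cantor.of_nat a in
  let M := Mn s in
  (Cantor.to_nat (Cantor.to_nat (Cantor.to_nat (c*M, d*M + S b), (S b * M - 1)),
                 Cantor.to_nat (Cantor.to_nat (c*M + S b, d*M), (S b * M - 1))))%nat.

Lemma in_Nint s v x : in_interval (Nint s v) x <->
   qdec v - (/2)^(3*s+3) < x < qdec v + (/2)^(3*s+3).
Proof.
  unfold in_interval, Nint.
  destruct (Cantor.of_nat v) as [a b] eqn:Ev. destruct (Cantor.of_nat a) as [c d] eqn:Ea.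
  assert (Hq : qdec v = (INR c - INR d) / INR (S b)) by (unfold qdec; rewrite Ev, Ea; auto).
  rewrite Hq. rewrite cancel_of_to. rewrite !qdec_code.
  pose proof (Mn_pos s). replace (S (S b * Mn s - 1)) with (S b * Mn s)%nat by lia.
  assert (HM : 0 < INR (Mn s)) by (apply lt_0_INR; auto).
  assert (Hb : 0 < INR (S b)) by (apply lt_0_INR; lia).
  assert (E1 : (INR (c * Mn s) - INR (d * Mn s + S b)) / INR (S b * Mn s) =
     (INR c - INR d) / INR (S b) - / INR (Mn s)).
  { repeat (rewrite mult_INR || rewrite plus_INR). field. split; lra. }
  assert (E2 : (INR (c * Mn s + S b) - INR (d * Mn s)) / INR (S b * Mn s) =
     (INR c - INR d) / INR (S b) + / INR (Mn s)).
  { repeat (rewrite mult_INR || rewrite plus_INR). field. split; lra. }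
  rewrite E1, E2, Mn_R, Rinv_inv. tauto.
Qed.

Lemma length_prefix p t : length (prefix p t) = t.
Proof. induction t; simpl; auto. rewrite length_app, IHt; simpl; lia. Qed.

Lemma firstn_prefix p k t : (k <= t)%nat -> firstn k (prefix p t) = prefix p k.
Proof.
  induction t; intros H.
  - replace k with 0%nat by lia; auto.
  - destruct (Nat.eq_dec k (S t)) as [->|Hn].
    + apply firstn_all2. rewrite length_prefix; auto.
    + simpl. rewrite firstn_app. rewrite length_prefix. replace (k - t)%nat with 0%nat by lia.
      simpl. rewrite app_nil_r. apply IHt; lia.
Qed.

Definition fnz (P : nat -> nat -> Prop) k v := P k (S v) /\ forall j, (j < k)%nat -> P j 0%nat.

Section Dir2.
Variable e : prf.

Definition Pl s l k v := peval e (npair (3*s+4) (npair (code_list (firstn k l)) (code_list (prefix (str s) k)))) v.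

Definition step (l : list nat) : nat :=
  match excluded_middle_informative
     (exists v k, (k <= length l)%nat /\ fnz (Pl (fst (Cantor.of_nat (length l))) l) k v) with
  | left h => S (Nint (fst (Cantor.of_nat (length l))) (proj1_sig (constructive_indefinite_description _ h)))
  | right _ => 0%nat
  end.

Lemma step_cases l :
  (exists v k, (k <= length l)%nat /\ fnz (Pl (fst (Cantor.of_nat (length l))) l) k v /\
     step l = S (Nint (fst (Cantor.of_nat (length l))) v)) \/
  ((~ exists v k, (k <= length l)%nat /\ fnz (Pl (fst (Cantor.of_nat (length l))) l) k v) /\ step l = 0%nat).
Proof.
  unfold step. destruct (excluded_middle_informative _) as [h|h].
  - left. destruct (constructive_indefinite_description _ h) as [v [k Hv]]; simpl.
    exists v, k. tauto.
  - right; auto.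
Qed.

Fixpoint Lp (t : nat) : list nat := match t with 0%nat => nil | S t => Lp t ++ [step (Lp t)] end.
Definition pseq : baire := fun t => step (Lp t).

Lemma Lp_prefix t : Lp t = prefix pseq t.
Proof. induction t; simpl; auto. rewrite <- IHt. auto. Qed.

Definition Pp s k v := peval e (npair (3*s+4) (npair (code_list (prefix pseq k)) (code_list (prefix (str s) k)))) v.

Lemma Pl_Pp s t k v : (k <= t)%nat -> Pl s (Lp t) k v <-> Pp s k v.
Proof. intros H. unfold Pl, Pp. rewrite Lp_prefix, firstn_prefix by auto. tauto. Qed.

Lemma fnz_Pl_Pp s t k v : (k <= t)%nat -> fnz (Pl s (Lp t)) k v <-> fnz (Pp s) k v.
Proof.
  intros H. unfold fnz. rewrite Pl_Pp by auto. split; intros [A B]; split; auto;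
  intros j Hj; specialize (B j Hj); apply Pl_Pp in B || apply Pl_Pp; auto; lia.
Qed.

Lemma fnz_unique s k1 v1 k2 v2 : fnz (Pp s) k1 v1 -> fnz (Pp s) k2 v2 -> v1 = v2.
Proof.
  intros [A B] [C D]. refine (proj2 (first_nz_unique (Pp s) _ k1 v1 k2 v2 A B C D)).
  intros; eapply peval_det; eauto.
Qed.

Lemma pseq_spec1 t c : pseq t = S c -> exists s v k, c = Nint s v /\ fnz (Pp s) k v.
Proof.
  unfold pseq. destruct (step_cases (Lp t)) as [[v [k [Hk [Hf Hs]]]]|[_ Hs]]; rewrite Hs; [|discriminate].
  intros E; injection E as <-. rewrite Lp_prefix, length_prefix in *.
  exists (fst (Cantor.of_nat t)), v, k. split; auto.
  rewrite <- Lp_prefix in Hf. apply fnz_Pl_Pp in Hf; auto.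
Qed.

Lemma pseq_spec2 s v k : fnz (Pp s) k v -> pseq (Cantor.to_nat (s, k)) = S (Nint s v).
Proof.
  intros Hf. set (t := Cantor.to_nat (s, k)).
  assert (Hkt : (k <= t)%nat) by (unfold t; pose proof (to_nat_non_decreasing s k); lia).
  assert (Hs : fst (Cantor.of_nat t) = s) by (unfold t; rewrite cancel_of_to; auto).
  assert (Hl : length (Lp t) = t) by (rewrite Lp_prefix, length_prefix; auto).
  unfold pseq. destruct (step_cases (Lp t)) as [[v' [k' [Hk [Hf' E]]]]|[Hn _]]; rewrite Hl, Hs in *.
  - rewrite E. apply fnz_Pl_Pp in Hf'; auto. rewrite (fnz_unique _ _ _ _ _ Hf' Hf). auto.
  - exfalso. apply Hn. exists v, k. split; auto. apply fnz_Pl_Pp; auto.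
Qed.

Definition choose_right (s : nat) (z : R) : bool :=
  if excluded_middle_informative (exists v k w, fnz (Pp s) k v /\ z <= w <= z + (/3)^(S s) /\
     Rabs (w - qdec v) < (/2)^(3*s+3)) then true else false.

Lemma choose_right_true s z : choose_right s z = true -> exists v k w, fnz (Pp s) k v /\
   z <= w <= z + (/3)^(S s) /\ Rabs (w - qdec v) < (/2)^(3*s+3).
Proof. unfold choose_right; destruct (excluded_middle_informative _); auto; discriminate. Qed.

Lemma choose_right_false s z : choose_right s z = false -> ~ exists v k w, fnz (Pp s) k v /\
   z <= w <= z + (/3)^(S s) /\ Rabs (w - qdec v) < (/2)^(3*s+3).
Proof. unfold choose_right; destruct (excluded_middle_informative _); auto; discriminate. Qed.

Fixpoint Sq (s : nat) : R := match s with
  | 0%nat => 0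
  | S s' => Sq s' + (if choose_right s' (Sq s') then 2 * (/3)^(S s') else 0) end.

Lemma tp_pos n : 0 < (/3)^n.
Proof. apply pow_lt; lra. Qed.

Lemma Sq_bounds s d : Sq s <= Sq (s + d) <= Sq s + (/3)^s - (/3)^(s+d).
Proof.
  induction d.
  - rewrite Nat.add_0_r; lra.
  - rewrite Nat.add_succ_r. simpl Sq. simpl pow.
    pose proof (tp_pos (s + d)).
    destruct (choose_right (s + d) (Sq (s + d))); lra.
Qed.

Definition SqE (z : R) : Prop := exists n, z = Sq n.

Lemma SqE_bound : bound SqE.
Proof.
  exists 1. intros z [n ->]. pose proof (Sq_bounds 0 n). simpl in H. pose proof (tp_pos n). lra.
Qed.

Definition yp : R := proj1_sig (completeness SqE SqE_bound (ex_intro _ 0 (ex_intro _ 0%nat eq_refl))).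

Lemma yp_bounds s : Sq s <= yp <= Sq s + (/3)^s.
Proof.
  unfold yp. destruct (completeness _ _ _) as [m [Hm1 Hm2]]; simpl. split.
  - apply Hm1. exists s; auto.
  - apply Hm2. intros z [n ->].
    destruct (le_lt_dec s n).
    + replace n with (s + (n - s))%nat by lia. pose proof (Sq_bounds s (n - s)).
      pose proof (tp_pos (s + (n - s))). lra.
    + pose proof (Sq_bounds n (s - n)). replace (n + (s - n))%nat with s in H by lia.
      pose proof (tp_pos s). lra.
Qed.

Lemma gap_ineq s : 2 * (/2)^(3*s+3) <= (/3)^(S s).
Proof.
  replace (3*s+3)%nat with (3 * S s)%nat by lia. rewrite pow_mult.
  replace ((/2)^3) with (/8) by (simpl; field).
  simpl. assert ((/8)^s <= (/3)^s) by (apply pow_incr; lra). pose proof (tp_pos s). lra.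
Qed.

Lemma yp_in : inA pseq yp.
Proof.
  intros [n [c [Hn Hi]]]. destruct (pseq_spec1 _ _ Hn) as [s [v [k [-> Hf]]]].
  apply in_Nint in Hi. pose proof (yp_bounds (S s)) as Hb. simpl Sq in Hb.
  pose proof (gap_ineq s). pose proof (tp_pos (S s)).
  assert (E3 : (/3)^(S s) = /3 * (/3)^s) by auto. rewrite E3 in *.
  destruct (choose_right s (Sq s)) eqn:Ec.
  - destruct (choose_right_true _ _ Ec) as [v' [k' [w [Hf' [Hw Hw']]]]].
    rewrite (fnz_unique _ _ _ _ _ Hf' Hf) in Hw'.
    apply Rabs_def2 in Hw'. lra.
  - apply (choose_right_false _ _ Ec). exists v, k, yp. split; auto. split; [lra|].
    apply Rabs_def1; lra.
Qed.

End Dir2.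

Lemma Rabs_le2 a b : Rabs a <= b -> - b <= a <= b.
Proof. intros; pose proof (Rle_abs a); pose proof (Rle_abs (-a)); rewrite Rabs_Ropp in *; auto; split; lra. Qed.

Lemma hp_Slt n : (/2)^(S n) < (/2)^n.
Proof. assert (E : (/2)^(S n) = /2 * (/2)^n) by auto. rewrite E. pose proof (hp_pos n). lra. Qed.

Theorem dir2 : ~ weihrauch_le C_R Sort.
Proof.
  intros [H [K [fH [[e He] [fK [cK Hr]]]]]].
  destruct (Hr Gsort Gsort_real) as [_ Hr'].
  destruct (Hr' (pseq e) (closedA (pseq e)) (delta_closedA _) (ex_intro _ (yp e) (yp_in e)))
    as [r [[q [s' [HK [HG HH]]]] [x [Hx HA]]]].
  simpl in HA.
  assert (Hs : exists s0, s' = str s0).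
  { destruct HG as [x' [_ [[n [_ ->]]|[_ ->]]]]; eauto. }
  destruct Hs as [s0 ->].
  destruct (He _ _ _ HH (3*s0+4)%nat) as [k [Hk Hk']].
  assert (Hf : fnz (Pp e s0) k (r (3*s0+4)%nat)) by (split; auto).
  apply HA. exists (Cantor.to_nat (s0, k)), (Nint s0 (r (3*s0+4)%nat)). split.
  - apply pseq_spec2; auto.
  - apply in_Nint. pose proof (name_close _ _ Hx (3*s0+4)%nat).
    assert ((/2)^(3*s0+4) < (/2)^(3*s0+3)).
    { replace (3*s0+4)%nat with (S (3*s0+3)) by lia. apply hp_Slt. }
    apply Rabs_le2 in H0. lra.
Qed.


Definition goodq (q : baire) : Prop := exists y, inA q y.

Definition pt (q : baire) : R :=
  match excluded_middle_informative (goodq q) with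
  | left h => proj1_sig (constructive_indefinite_description _ h)
  | right _ => 0 end.

Lemma pt_spec q : goodq q -> inA q (pt q).
Proof.
  intros h. unfold pt. destruct (excluded_middle_informative _) as [h'|h']; [|contradiction].
  destruct (constructive_indefinite_description _ h'); auto.
Qed.

Definition Gg (q0 r0 : baire) : pfun1 := fun q r =>
  (q = q0 /\ r = r0) \/ (q <> q0 /\ goodq q /\ r = nm (pt q)).

Lemma Gg_real q0 r0 y0 : inA q0 y0 -> delta reals r0 y0 -> realizer C_R (Gg q0 r0).
Proof.
  intros Hy0 Hr0. split.
  - intros q r1 r2 [[-> ->]|[Hn [_ ->]]] [[E ->]|[Hn2 [_ ->]]]; congruence.
  - intros q A HA [y Hy]. pose proof (delta_closed_inA _ _ HA) as HA'.
    destruct (classic (q = q0)) as [->|Hn].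
    + exists r0. split; [left; auto|]. exists y0. split; auto. simpl. apply HA'; auto.
    + assert (Hg : goodq q) by (exists y; apply HA'; auto).
      exists (nm (pt q)). split; [right; auto|]. exists (pt q). split; [apply nm_name|].
      simpl. apply HA'. apply pt_spec; auto.
Qed.

Definition pn (x : nat -> bool) : baire := fun n => if x n then 1%nat else 0%nat.

Lemma pn_name x : delta cantor (pn x) x.
Proof. intro n; auto. Qed.

Lemma pn_agree x x' k : (forall n, (n < k)%nat -> x' n = x n) -> forall i, (i < k)%nat -> pn x' i = pn x i.
Proof. intros H i Hi; unfold pn; rewrite H; auto. Qed.

Lemma inA_const0 y : inA (fun _ => 0%nat) y.
Proof. intros [n [c [E _]]]; discriminate. Qed.

Lemma interval_nbhd c l : in_interval c l -> neighbourhood (fun y => in_interval c y) l.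
Proof.
  unfold in_interval. destruct (Cantor.of_nat c) as [a b]. intros Hi.
  assert (Hp : 0 < Rmin (l - qdec a) (qdec b - l)) by (apply Rmin_glb_lt; lra).
  exists (mkposreal _ Hp). intros y Hy. unfold disc in Hy; simpl in Hy.
  pose proof (Rmin_l (l - qdec a) (qdec b - l)). pose proof (Rmin_r (l - qdec a) (qdec b - l)).
  apply Rabs_def2 in Hy. lra.
Qed.

Section Dir1.
Variables (H : pfun2) (K : pfun1).
Hypotheses (fH : functional2 H) (cH : computable2 H) (fK : functional1 K) (cK : computable1 K)
  (Hr : forall G, realizer C_R G -> realizer Sort (fun p r => exists q s, K p q /\ G q s /\ H p s r)).

Lemma key x q : K (pn x) q -> forall y, inA q y -> forall r, delta reals r y ->
  exists out z, H (pn x) r out /\ delta cantor out z /\ mval Sort x z.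
Proof.
  intros HK y Hy r Hry. destruct (Hr _ (Gg_real q r y Hy Hry)) as [_ R].
  destruct (R (pn x) x (pn_name x) I) as [out [[q' [s [HK' [HG HH]]]] [z [Hz Hm]]]].
  rewrite (fK _ _ _ HK' HK) in HG.
  destruct HG as [[_ ->]|[Hn _]]; [|congruence].
  exists out, z. auto.
Qed.

Lemma dom x : exists q, K (pn x) q /\ goodq q.
Proof.
  destruct (Hr _ (Gg_real (fun _ => 0%nat) (nm 0) 0 (inA_const0 0) (nm_name 0))) as [_ R].
  destruct (R (pn x) x (pn_name x) I) as [out [[q' [s [HK' [HG HH]]]] _]].
  exists q'. split; auto.
  destruct HG as [[-> _]|[_ [Hg _]]]; auto. exists 0. apply inA_const0.
Qed.

Definition Pm (xw : nat -> bool) (j m : nat) : Prop :=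
  forall x', (forall n, (n < m)%nat -> x' n = xw n) -> forall q', K (pn x') q' ->
    forall y, Rabs y <= INR j -> inA q' y ->
    exists r out, delta reals r y /\ H (pn x') r out /\ out j = 1%nat.

Lemma claim xw j : exactly_n_zeros xw j -> exists m, Pm xw j m.
Proof.
  intros Hex. apply NNPP; intro Hno.
  assert (Hall : forall m, exists t : (nat -> bool) * baire * R,
    let '(x', q', y) := t in
    (forall n, (n < m)%nat -> x' n = xw n) /\ K (pn x') q' /\ Rabs y <= INR j /\ inA q' y /\
    forall r out, delta reals r y -> H (pn x') r out -> out j <> 1%nat).
  { intros m. apply NNPP; intro Hm. apply Hno. exists m. intros x' Ha q' HK y Hy HA.
    apply NNPP; intro Hc. apply Hm. exists (x', q', y). repeat split; auto.
    intros r out Hr1 Hr2 E. apply Hc; eauto. }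
  destruct (choice _ Hall) as [f Hf].
  set (xs := fun m => fst (fst (f m))). set (qs := fun m => snd (fst (f m))). set (ys := fun m => snd (f m)).
  assert (Hf' : forall m, (forall n, (n < m)%nat -> xs m n = xw n) /\ K (pn (xs m)) (qs m) /\
     Rabs (ys m) <= INR j /\ inA (qs m) (ys m) /\
     forall r out, delta reals r (ys m) -> H (pn (xs m)) r out -> out j <> 1%nat).
  { intros m. specialize (Hf m). unfold xs, qs, ys. destruct (f m) as [[a b] c]. exact Hf. }
  clear Hf Hall.
  destruct (Bolzano_Weierstrass ys (fun c => - INR j <= c <= INR j) (compact_P3 _ _)) as [l Hl].
  { intros m. destruct (Hf' m) as [_ [_ [Hb _]]]. apply Rabs_le2 in Hb. lra. }
  destruct (dom xw) as [qw [HKw _]].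
  destruct (classic (inA qw l)) as [Hin|Hout].
  - destruct (key xw qw HKw l Hin (nm l) (nm_name l)) as [out [z [HH [Hz Hm]]]].
    assert (Ho : out j = 1%nat) by (rewrite (Hz j), (sort_exact _ _ _ Hex Hm); auto).
    destruct (contH H cH _ _ _ j HH) as [k Hk].
    assert (Hp : 0 < (/2)^(S k)) by apply hp_pos.
    destruct (Hl (disc l (mkposreal _ Hp)) k) as [p [Hpk Hpd]].
    { exists (mkposreal _ Hp). intros y Hy; auto. }
    unfold disc in Hpd; change (pos (mkposreal _ Hp)) with ((/2)^(S k)) in Hpd.
    destruct (Hf' p) as [Ha [HKp [_ [HAp Hv]]]].
    pose proof (spl_name l (ys p) k ltac:(lra)) as Hsn.
    destruct (key (xs p) (qs p) HKp (ys p) HAp _ Hsn) as [out' [z' [HH' _]]].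
    apply (Hv _ out' Hsn HH'). rewrite <- Ho. apply (Hk _ _ _ HH').
    + apply pn_agree. intros n Hn; apply Ha; lia.
    + intros i Hi. unfold spl. destruct (Nat.ltb_spec i k); auto; lia.
  - apply NNPP in Hout. destruct Hout as [n0 [c [Hq Hi]]].
    destruct (contK K cK _ _ n0 HKw) as [k Hk].
    destruct (Hl _ k (interval_nbhd c l Hi)) as [p [Hpk Hpi]].
    destruct (Hf' p) as [Ha [HKp [_ [HAp _]]]].
    apply HAp. exists n0, c. split; auto. rewrite <- Hq. apply (Hk _ _ HKp).
    apply pn_agree. intros n Hn; apply Ha; lia.
Qed.


Definition mC (xw : nat -> bool) (j : nat) : nat :=
  match excluded_middle_informative (exists m, Pm xw j m) with
  | left h => proj1_sig (constructive_indefinite_description _ h)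
  | right _ => 0%nat end.

Lemma mC_spec xw j : exactly_n_zeros xw j -> Pm xw j (mC xw j).
Proof.
  intros Hex. unfold mC. destruct (excluded_middle_informative _) as [h|h].
  - destruct (constructive_indefinite_description _ h); auto.
  - exfalso; apply h; apply claim; auto.
Qed.

Definition TB (x : nat -> bool) (j : nat) : Prop :=
  exists N, (forall n, (N <= n)%nat -> x n = true) /\ zeros_upto x N = j.

Definition tb (x : nat -> bool) (j : nat) : nat :=
  match excluded_middle_informative (TB x j) with
  | left h => proj1_sig (constructive_indefinite_description _ h)
  | right _ => 0%nat end.

Lemma tb_spec x j : TB x j -> (forall n, (tb x j <= n)%nat -> x n = true) /\ zeros_upto x (tb x j) = j.
Proof.
  intros h0. unfold tb. destruct (excluded_middle_informative _) as [h|h]; [|contradiction].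
  destruct (constructive_indefinite_description _ h); auto.
Qed.

Definition Mj x j := (mC x j + tb x j)%nat.

Fixpoint X (j : nat) : nat -> bool :=
  match j with
  | 0%nat => fun _ => true
  | S j' => fun n => if Nat.ltb n (Mj (X j') j') then X j' n
                     else if Nat.eqb n (Mj (X j') j') then false else true
  end.

Lemma zeros_ext x x' m : (forall n, (n < m)%nat -> x n = x' n) -> zeros_upto x m = zeros_upto x' m.
Proof.
  induction m; intros Ha; simpl; auto. rewrite IHm by (intros; apply Ha; lia). rewrite Ha by lia. auto.
Qed.

Lemma X_TB j : TB (X j) j.
Proof.
  induction j.
  - exists 0%nat. split; auto.
  - destruct (tb_spec _ _ IHj) as [Ht Hz].
    set (M := Mj (X j) j).
    assert (HM : (tb (X j) j <= M)%nat) by (unfold M, Mj; lia).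
    exists (S M). split.
    + intros n Hn. simpl. fold M. destruct (Nat.ltb_spec n M); [lia|].
      destruct (Nat.eqb_spec n M); [lia|auto].
    + assert (E1 : X (S j) M = false).
      { simpl. fold M. rewrite Nat.ltb_irrefl, Nat.eqb_refl. auto. }
      assert (E2 : zeros_upto (X (S j)) M = j).
      { rewrite (zeros_ext _ (X j)).
        2:{ intros n Hn. simpl. fold M. destruct (Nat.ltb_spec n M); auto; lia. }
        replace M with (tb (X j) j + (M - tb (X j) j))%nat by lia.
        rewrite tail_const; auto. }
      change (zeros_upto (X (S j)) (S M)) with
        (zeros_upto (X (S j)) M + (if X (S j) M then 0 else 1))%nat.
      rewrite E1, E2. lia.
Qed.

Lemma X_exact j : exactly_n_zeros (X j) j.
Proof.
  destruct (X_TB j) as [N [Ht Hz]]. pattern j at 2. rewrite <- Hz. apply tail_exactly; auto.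
Qed.

Definition Ms j := Mj (X j) j.

Lemma Ms_lt j : (Ms j < Ms (S j))%nat.
Proof.
  destruct (tb_spec _ _ (X_TB (S j))) as [Ht _].
  unfold Ms at 2, Mj. destruct (le_lt_dec (tb (X (S j)) (S j)) (Ms j)) as [Hle|Hlt]; [|lia].
  specialize (Ht _ Hle). simpl in Ht. unfold Ms in Ht. rewrite Nat.ltb_irrefl, Nat.eqb_refl in Ht.
  discriminate.
Qed.

Lemma Ms_mono j d : (Ms j <= Ms (j + d))%nat.
Proof.
  induction d; [rewrite Nat.add_0_r; lia|]. rewrite Nat.add_succ_r. pose proof (Ms_lt (j + d)); lia.
Qed.

Lemma Ms_ge j : (j <= Ms j)%nat.
Proof. induction j; [lia|]. pose proof (Ms_lt j); lia. Qed.

Lemma X_agree j d n : (n < Ms j)%nat -> X (j + d) n = X j n.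
Proof.
  intros Hn. induction d; [rewrite Nat.add_0_r; auto|].
  rewrite Nat.add_succ_r. simpl. pose proof (Ms_mono j d). unfold Ms in *.
  destruct (Nat.ltb_spec n (Mj (X (j + d)) (j + d))); auto; lia.
Qed.

Definition xinf : nat -> bool := fun n => X (S n) n.

Lemma xinf_agree j n : (n < Ms j)%nat -> xinf n = X j n.
Proof.
  intros Hn. unfold xinf. destruct (le_lt_dec (S n) j).
  - replace j with (S n + (j - S n))%nat by lia. rewrite X_agree; auto.
    pose proof (Ms_ge (S n)); lia.
  - replace (S n) with (j + (S n - j))%nat by lia. rewrite X_agree; auto.
Qed.

Lemma xinf_inf : inf_many_zeros xinf.
Proof.
  intros N. exists (Ms N). split; [apply Ms_ge|].
  rewrite (xinf_agree (S N)) by apply Ms_lt.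
  simpl. unfold Ms. rewrite Nat.ltb_irrefl, Nat.eqb_refl. auto.
Qed.

Lemma dir1_false : False.
Proof.
  destruct (dom xinf) as [q [HK [y Hy]]].
  set (j := Z.to_nat (up (Rabs y))).
  assert (Hj : Rabs y <= INR j).
  { unfold j. destruct (archimed (Rabs y)) as [A1 A2]. pose proof (Rabs_pos y).
    rewrite INR_IZR_INZ, Z2Nat.id; [lra|]. apply le_IZR. lra. }
  destruct (mC_spec _ _ (X_exact j) xinf) with (q' := q) (y := y) as [r [out [Hry [HH Ho]]]]; auto.
  { intros n Hn. apply xinf_agree. unfold Ms, Mj. lia. }
  destruct (key xinf q HK y Hy r Hry) as [out' [z [HH' [Hz Hm]]]].
  rewrite (fH _ _ _ _ HH' HH) in Hz. rewrite Hz, (sort_inf _ j _ xinf_inf Hm) in Ho. discriminate.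
Qed.

End Dir1.

Theorem dir1 : ~ weihrauch_le Sort C_R.
Proof.
  intros [H [K [fH [cH [fK [cK Hr]]]]]]. exact (dir1_false H K fH cH fK cK Hr).
Qed.


Theorem proposition3p5 :
  ~ weihrauch_le Sort C_R /\ ~ weihrauch_le C_R Sort.
Proof. split; [exact dir1 | exact dir2]. Qed.
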